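(* Let $K\ge 1$ be an integer. Every element $P$ of $LD_K$ admits a unique factorisation into linear dendrons with $K$ rhizomes: if $P=F_1\times\cdots\times F_N=G_1\times\cdots\times G_M$ where all $F_i$ and $G_j$ are linear dendrons with $K$ rhizomes, then $N=M$ and the multisets $\{\{F_1,\dots,F_N\}\}$ and $\{\{G_1,\dots,G_M\}\}$ are equal (up to isomorphism).
   Context: A finite dynamical system (FDS) is a function $A:S_A\to S_A$ on a finite set, considered up to isomorphism of functional graphs (arcs $x\to A(x)$). The product $AB$ is the function on $S_A\times S_B$, $(a,b)\mapsto(A(a),B(b))$. A dendron is an FDS with connected functional graph and a fixpoint. A predecessor of a state $s$ is a state $t$ with $A(t)=s$ (the fixpoint is a predecessor of itself). A linear dendron is a dendron in which every state other than the fixpoint has at most one predecessor; it has $K$ rhizomes if its fixpoint has exactly $K$ predecessors other than itself. $LD_K$ is the multiplicative monoid generated (under the product of FDSs) by the linear dendrons with $K$ rhizomes. *)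

(* Defs.v *)
From mathcomp Require Import all_boot.
Set Implicit Arguments. Unset Strict Implicit. Unset Printing Implicit Defensive.

Record fds := FDS { st : finType; fn : st -> st }.
Arguments fn : clear implicits.

Definition fds_iso (A B : fds) : Prop :=
  exists h : st A -> st B, bijective h /\ forall x, h (fn A x) = fn B (h x).

Definition fds_prod (A B : fds) : fds :=
  @FDS (st A * st B)%type (fun p => (fn A p.1, fn B p.2)).

Definition fds_one : fds := @FDS unit (fun x => x).

Definition fds_prodl (Fs : seq fds) : fds := foldr fds_prod fds_one Fs.

Definition fds_connected (A : fds) : Prop :=
  forall x y : st A, connect (fun u v => (fn A u == v) || (fn A v == u)) x y.

Definition npred_other (A : fds) (s : st A) : nat :=
  #|[pred t | (fn A t == s) && (t != s)]|.

Definition linear_dendron (K : nat) (A : fds) : Prop :=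
  fds_connected A /\
  exists r : st A, fn A r = r /\
    (forall s : st A, s != r -> #|[pred t | fn A t == s]| <= 1) /\
    @npred_other A r = K.

(* Main.v *)
Require Import Defs.
From mathcomp Require Import all_boot zify.
From mathcomp Require all_algebra.
Set Implicit Arguments. Unset Strict Implicit. Unset Printing Implicit Defensive.


Definition indeg (A : fds) (x : st A) : nat := #|[pred t | fn A t == x]|.
Definition wt (A : fds) (p L : nat) (x : st A) : nat :=
  indeg x ^ p * \prod_(k < L) indeg (iter k.+1 (fn A) x) ^ L.
Definition Ssum (A : fds) p L := \sum_(x : st A) wt p L x.

Lemma iter_prod (A B : fds) k (x : st (fds_prod A B)) :
  iter k (fn (fds_prod A B)) x = (iter k (fn A) x.1, iter k (fn B) x.2).
Proof. by elim: k => [|k IH]; [case: x | rewrite !iterS IH]. Qed.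

Lemma indeg_prod (A B : fds) (x : st (fds_prod A B)) :
  indeg x = indeg x.1 * indeg x.2.
Proof.
rewrite /indeg -cardX; apply: eq_card => -[u v] /=.
by case: x => a b; rewrite !inE /= xpair_eqE.
Qed.

Lemma wt_prod (A B : fds) p L (x : st (fds_prod A B)) :
  wt p L x = wt p L x.1 * wt p L x.2.
Proof.
rewrite /wt indeg_prod expnMn.
rewrite (eq_bigr (fun k : 'I_L => indeg (iter k.+1 (fn A) x.1) ^ L *
   indeg (iter k.+1 (fn B) x.2) ^ L)); last first.
  by move=> k _; rewrite indeg_prod iter_prod expnMn.
rewrite big_split /=.
by rewrite -!mulnA; congr (_ * _); rewrite mulnCA.
Qed.

Lemma Ssum_prod (A B : fds) p L :
  Ssum (fds_prod A B) p L = Ssum A p L * Ssum B p L.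
Proof.
rewrite /Ssum big_distrlr /= pair_big /=.
by apply: eq_bigr => -[a b] _; rewrite wt_prod.
Qed.

Lemma Ssum_one p L : Ssum fds_one p L = 1.
Proof.
have h1 : forall x : st fds_one, indeg x = 1.
  move=> x; rewrite /indeg -(card_unit) ; apply: eq_card => -[]; case: x; rewrite /= /in_mem /=.
  by [].
rewrite /Ssum /= (@big_pred1 _ _ _ _ (tt : st fds_one) xpredT) /=; last by case.
rewrite /wt h1 exp1n mul1n.
by apply: big1 => k _; rewrite h1 exp1n.
Qed.

Lemma Ssum_prodl Fs p L :
  Ssum (fds_prodl Fs) p L = \prod_(F <- Fs) Ssum F p L.
Proof.
elim: Fs => [|F Fs IH]; first by rewrite big_nil Ssum_one.
by rewrite big_cons /= Ssum_prod IH.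
Qed.

Lemma Ssum_iso (A B : fds) p L : fds_iso A B -> Ssum A p L = Ssum B p L.
Proof.
case=> h [hb hc].
have hi : injective h by apply: bij_inj.
have hit : forall k x, h (iter k (fn A) x) = iter k (fn B) (h x).
  by move=> k x; elim: k => [|k IH] //=; rewrite hc IH.
have hd : forall x, indeg (h x) = indeg x.
  move=> x; rewrite /indeg.
  case: hb => g gh hg.
  rewrite -(card_image hi); apply: eq_card => y; rewrite inE.
  apply/eqP/imageP.
    move=> e; exists (g y); last by rewrite hg.
    by rewrite inE; apply/eqP; apply: hi; rewrite hc hg e.
  by case=> t; rewrite inE => /eqP <- ->; rewrite hc.
rewrite /Ssum (reindex h) /=; last by apply: onW_bij.
apply: eq_bigr => x _; rewrite /wt hd; congr (_ * _).
by apply: eq_bigr => k _; rewrite -hit hd.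
Qed.


Definition hasp (A : fds) (x : st A) := [exists t, fn A t == x].

Lemma hasp_indeg (A : fds) (x : st A) : hasp x = (0 < indeg x).
Proof.
rewrite /hasp /indeg; apply/existsP/card_gt0P => -[t ht]; exists t => //.
Qed.

Record LDdata (K : nat) (F : fds) (r : st F) (d : st F -> nat) (L : nat) : Prop := {
 ld_fix : fn F r = r;
 ld_iter : forall x k, (iter k (fn F) x == r) = (d x <= k);
 ld_df : forall x, d (fn F x) = (d x).-1;
 ld_dL : forall x, d x <= L;
 ld_inj : forall u v, fn F u = fn F v -> fn F u != r -> u = v;
 ld_indr : indeg r = K.+1;
 ld_ind1 : forall x, x != r -> indeg x <= 1;
 ld_D1 : #|[pred x | d x == 1]| = K }.

Arguments LDdata : clear implicits.

Lemma leq_ext a b : (forall k, (a <= k) = (b <= k)) -> a = b.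
Proof. by move=> h; apply/eqP; rewrite eqn_leq h leqnn -h leqnn. Qed.

Lemma analysis K F : linear_dendron K F ->
  exists r d L0, forall L, L0 <= L -> LDdata K F r d L.
Proof.
case=> conn [r [fr [h1 hK]]].
set e := fun u v : st F => (fn F u == v) || (fn F v == u).
have reach : forall x, exists k, iter k (fn F) x == r.
  have gen : forall p z, (exists k, iter k (fn F) z == r) -> path e z p ->
      exists k, iter k (fn F) (last z p) == r.
    elim=> [|y p IH] z /= hz; first by [].
    case/andP => ezy pp.
    apply: IH pp; case: hz => k /eqP hk.
    case/orP: ezy => /eqP ey.
      by exists k; rewrite -ey -iterSr iterS hk fr.
    by exists k.+1; rewrite iterSr ey hk.
  move=> x; have := conn r x; case/connectP => p pp ->.
  by apply: gen pp; exists 0.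
pose d x := ex_minn (reach x).
have hit : forall x k, (iter k (fn F) x == r) = (d x <= k).
  move=> x k; rewrite /d; case: ex_minnP => m /eqP hm hmin.
  apply/idP/idP; first by apply: hmin.
  by move=> /subnK <-; rewrite iterD hm iter_fix.
exists r, d, (\max_x d x) => L hL; split => //.
- move=> x; apply: leq_ext => k.
  by rewrite -hit -iterSr hit; case: (d x) => [|n] //=; rewrite ltnS ?leq0n.
- by move=> x; apply: leq_trans hL; apply: leq_bigmax.
- move=> u v e1 ne; have := h1 _ ne; move/card_le1_eqP; apply; rewrite inE ?e1 //.
- rewrite /indeg (cardD1 r) inE fr eqxx /= -hK; congr (_ + _).
  by apply: eq_card => t; rewrite !inE andbC.
- rewrite -hK; apply: eq_card => x; rewrite !inE.
  have := hit x 1; have := hit x 0; rewrite /= => h0 h1'.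
  rewrite h1' h0; case: (d x) => [|[|n]] //.
Qed.

Section LD.
Variables (K : nat) (F : fds) (r : st F) (d : st F -> nat) (L : nat).
Hypothesis H : LDdata K F r d L.

Lemma ld_d0 x : (d x == 0) = (x == r).
Proof. by rewrite -leqn0 -(ld_iter H). Qed.

Definition gfun (x : st F) := \sum_(k < L) (iter k.+1 (fn F) x == r).
Definition Rdef := \sum_(x | (x != r) && hasp x) (K.+1 ^ L) ^ gfun x.
Definition cnt j := #|[pred x | (x != r) && hasp x && (gfun x == j)]|.

Lemma iter_r k : iter k (fn F) r = r.
Proof. exact: iter_fix (ld_fix H). Qed.

Lemma Ssum_LD p : 0 < p -> Ssum F p L = K.+1 ^ p * K.+1 ^ (L * L) + Rdef.
Proof.
move=> p0; rewrite /Ssum (bigD1 r) //=; congr (_ + _).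
  rewrite /wt (ld_indr H); congr (_ * _).
  rewrite (eq_bigr (fun _ => K.+1 ^ L)); last by move=> k _; rewrite iter_r (ld_indr H).
  by rewrite prod_nat_const card_ord -expnM.
rewrite /Rdef (bigID (fun x => hasp x)) /= addnC big1; last first.
  move=> x /andP [_ hx]; rewrite /wt.
  by move: hx; rewrite hasp_indeg -eqn0Ngt => /eqP ->; rewrite exp0n.
rewrite add0n; apply: eq_big => [x|x /andP [xr hx]]; first by rewrite andbC.
rewrite /wt.
have -> : indeg x = 1.
  by apply/eqP; rewrite eqn_leq (ld_ind1 H xr) -hasp_indeg.
rewrite exp1n mul1n /gfun expn_sum; apply: eq_bigr => k _.
have hk : hasp (iter k.+1 (fn F) x) by apply/existsP; exists (iter k (fn F) x); rewrite iterS.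
case: eqP => [->|/eqP ne]; first by rewrite (ld_indr H) expn1.
have -> : indeg (iter k.+1 (fn F) x) = 1.
  by apply/eqP; rewrite eqn_leq (ld_ind1 H ne) -hasp_indeg.
by rewrite exp1n expn0.
Qed.

Lemma gfun_le x : gfun x <= L.
Proof.
rewrite /gfun; apply: leq_trans (_ : \sum_(k < L) 1 <= L).
  by apply: leq_sum => k _; case: (_ == _).
by rewrite sum_nat_const card_ord muln1.
Qed.

Lemma Rdef_cnt : Rdef = \sum_(j < L.+1) cnt j * (K.+1 ^ L) ^ j.
Proof.
rewrite /Rdef (partition_big (fun x => Ordinal (n:=L.+1) (gfun_le x)) xpredT) //=.
apply: eq_bigr => j _.
rewrite (eq_bigr (fun _ => (K.+1 ^ L) ^ j)); last by move=> x /andP [_ /eqP <-].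
rewrite sum_nat_const; congr (_ * _); apply: eq_card => x; rewrite !inE /=.
Qed.

Lemma sum_le_iter n m : \sum_(k < n) (m <= k.+1) = n - m.-1.
Proof.
elim: n => [|n IH]; first by rewrite big_ord0.
rewrite big_ord_recr /= IH; lia.
Qed.

Lemma gfun_d x : gfun x = L - (d x).-1.
Proof.
rewrite /gfun -sum_le_iter; apply: eq_bigr => k _.
by rewrite (ld_iter H).
Qed.

Lemma layer_cnt t : 1 <= t <= L ->
  #|[pred x | (d x == t) && hasp x]| = cnt (L.+1 - t).
Proof.
case/andP => t1 tL; apply: eq_card => x; rewrite !inE gfun_d.
have dL := ld_dL H x.
rewrite -ld_d0.
case: (d x =P t) => [->|ne] /=.
  by rewrite -lt0n t1 andbC /=; apply/esym/eqP; lia.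
case: (d x =P 0) => //= /eqP d0; rewrite andbC; case: (hasp x); rewrite ?andbF ?andbT //.
apply/esym/negP => /eqP hh; lia.
Qed.

Lemma layer_big t : L < t -> #|[pred x | (d x == t) && hasp x]| = 0.
Proof.
move=> Lt; apply: eq_card0 => x; rewrite !inE.
by have := ld_dL H x; case: eqP => // ->; rewrite leqNgt Lt.
Qed.

Lemma layer_img t : 1 <= t ->
  #|[pred x | d x == t.+1]| = #|[pred x | (d x == t) && hasp x]|.
Proof.
move=> t1.
have inj : {in [pred x | d x == t.+1] &, injective (fn F)}.
  move=> u v; rewrite !inE => /eqP du _ e; apply: (ld_inj H e).
  by rewrite -ld_d0 (ld_df H) du /= -lt0n.
rewrite -(card_in_imset inj); apply: eq_card => x.
rewrite [in RHS]inE; apply/imsetP/andP.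
  case=> u; rewrite inE => /eqP du ->; split.
    by rewrite (ld_df H) du.
  by apply/existsP; exists u.
case=> /eqP dx /existsP [u /eqP fu]; exists u => //.
rewrite inE; move: dx; rewrite -fu (ld_df H).
case: (d u) => [|n] /= e; [by rewrite -e in t1 | by rewrite -e].
Qed.

End LD.

Module PolyM.
Import all_algebra.
Import GRing.Theory Num.Theory.

Section PolyC.
Variable W : nat.
Hypothesis W0 : (0 < W)%N.

Local Open Scope ring_scope.
Definition lf (x : nat) : {poly rat} := W%:R *: 'X + (x%:R)%:P.
Definition Pl (s : seq nat) : {poly rat} := \prod_(x <- s) lf x.

Lemma lf_eval x (z : rat) : (lf x).[z] = W%:R * z + x%:R.
Proof. by rewrite /lf !hornerE. Qed.

Lemma Pl_eval s (z : nat) : (Pl s).[z%:R] = ((\prod_(x <- s) (W * z + x))%N)%:R.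
Proof.
rewrite /Pl horner_prod natr_prod; apply: eq_bigr => x _.
by rewrite lf_eval natrD natrM.
Qed.

Lemma Wr : (W%:R : rat) != 0.
Proof. by rewrite pnatr_eq0 -lt0n. Qed.

Lemma lf_neq0 x : lf x != 0.
Proof.
apply/negP => /eqP h.
have := congr1 (fun p : {poly rat} => p`_1) h.
rewrite /lf coefD coefZ coefX coefC /= mulr1 addr0 coef0 => /eqP.
by rewrite (negbTE Wr).
Qed.

Lemma Pl_perm (a b : seq nat) : Pl a = Pl b -> perm_eq a b.
Proof.
elim: a b => [|x a IH] b.
  case: b => [//|y b] /esym h.
  have := congr1 (fun p => p.[- (y%:R / W%:R)]) h.
  rewrite /Pl big_cons big_nil hornerM lf_eval hornerC mulrN mulrCA mulfV.
    by rewrite mulr1 addNr mul0r => /eqP; rewrite eq_sym oner_eq0.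
  exact: Wr.
move=> h.
have xb : x \in b.
  have := congr1 (fun p => p.[- (x%:R / W%:R)]) h.
  rewrite /Pl big_cons hornerM lf_eval mulrN mulrCA mulfV; last first.
    exact: Wr.
  rewrite mulr1 addNr mul0r horner_prod => /esym/eqP.
  rewrite prodf_seq_eq0 => /hasP [y yb /= /eqP].
  rewrite lf_eval mulrN mulrCA mulfV; last exact: Wr.
  rewrite mulr1 => /eqP; rewrite addrC subr_eq0 eqr_nat => /eqP <-.
  done.
have pb := perm_to_rem xb.
rewrite /Pl (perm_big _ pb) /= in h.
move: h; rewrite /Pl !big_cons => /(mulfI (lf_neq0 x)) h.
have := IH _ h; rewrite -(perm_cons x) => /perm_trans; apply; by rewrite perm_sym.
Qed.

Lemma prod_perm (c : nat) (a b : seq nat) : (1 < c)%N ->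
  (forall p, (0 < p)%N -> (\prod_(x <- a) (c ^ p * W + x) = \prod_(y <- b) (c ^ p * W + y))%N) ->
  perm_eq a b.
Proof.
move=> c1 h; apply: Pl_perm; apply/eqP; rewrite -subr_eq0; apply/negPn/negP => nz.
set d := Pl a - Pl b.
set rs := [seq ((c ^ i.+1)%N)%:R : rat | i <- iota 0 (size d)].
have : (size rs < size d)%N.
  apply: max_poly_roots => //.
    apply/allP => z /mapP [i _ ->].
    rewrite /root /d hornerD hornerN !Pl_eval.
    rewrite (eq_bigr (fun x => c ^ i.+1 * W + x)%N); last by move=> x _; rewrite mulnC.
    rewrite (eq_bigr (fun x => c ^ i.+1 * W + x)%N (P:=xpredT) (r:=b)); last by move=> x _; rewrite mulnC.
    by rewrite h // subrr.
  rewrite map_inj_uniq ?iota_uniq // => i j /eqP.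
  rewrite eqr_nat => /eqP /(expnI c1) [].
  done.
by rewrite size_map size_iota ltnn.
Qed.
End PolyC.

End PolyM.
Import PolyM.


Lemma inj_sub (T1 T2 : finType) (A : {pred T1}) (B : {pred T2}) (y0 : T2) :
  #|A| <= #|B| -> exists s : T1 -> T2, {in A &, injective s} /\ {in A, forall x, s x \in B}.
Proof.
move=> AB.
have hA : forall x, x \in A -> index x (enum A) < size (enum B).
  move=> x xA; rewrite -cardE; apply: leq_trans AB.
  by rewrite cardE index_mem mem_enum.
exists (fun x => nth y0 (enum B) (index x (enum A))); split.
  move=> x y xA yA /= /eqP e.
  rewrite nth_uniq ?hA ?enum_uniq // in e.
  have : nth x (enum A) (index x (enum A)) = nth x (enum A) (index y (enum A)).
    by rewrite (eqP e).
  by rewrite !nth_index ?mem_enum.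
move=> x xA /=; rewrite -mem_enum mem_nth //; exact: hA.
Qed.

Section Iso.
Variables (K : nat) (F G : fds) (rF : st F) (rG : st G) (dF : st F -> nat) (dG : st G -> nat) (L : nat).
Hypothesis HF : LDdata K F rF dF L.
Hypothesis HG : LDdata K G rG dG L.
Hypothesis cN : forall t, 1 <= t -> #|[pred x | dF x == t]| = #|[pred y | dG y == t]|.
Hypothesis cC : forall t, 1 <= t ->
  #|[pred x | (dF x == t) && hasp x]| = #|[pred y | (dG y == t) && hasp y]|.

Definition Pt t := exists h : st F -> st G,
  [/\ forall x, t <= dF x -> dG (h x) = dF x,
      {in [pred x | t <= dF x] &, injective h} &
      forall x, t < dF x -> h (fn F x) = fn G (h x)].

Lemma Pt_base t : L < t -> Pt t.
Proof.
move=> Lt; rewrite /Pt; exists (fun _ => rG); split.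
- by move=> x tx; have := ld_dL HF x; lia.
- by move=> x y; rewrite inE => tx; have := ld_dL HF x; lia.
- by move=> x tx; have := ld_dL HF x; lia.
Qed.

Lemma leaves_card t : 1 <= t ->
  #|[pred x | (dF x == t) && ~~ hasp x]| <= #|[pred y | (dG y == t) && ~~ hasp y]|.
Proof.
move=> t1.
have e1 : forall (T : finType) (d : T -> nat) (P : pred T),
  #|[pred x | (d x == t) && ~~ P x]| = #|[pred x | d x == t]| - #|[pred x | (d x == t) && P x]|.
  move=> T d P; rewrite -(cardID P [pred x | d x == t]) addKn.
  by apply: eq_card => x; rewrite !inE andbC.
by rewrite (e1 _ dF (@hasp F)) (e1 _ dG (@hasp G)) cN // cC.
Qed.

Definition piF (x : st F) := odflt x [pick z | fn F z == x].

Lemma piF_spec x : hasp x -> fn F (piF x) = x.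
Proof.
move=> /existsP [z hz]; rewrite /piF; case: pickP => [y /eqP //|/(_ z)].
by rewrite hz.
Qed.

Lemma piF_f x : fn F x != rF -> piF (fn F x) = x.
Proof.
move=> ne; have hp : hasp (fn F x) by apply/existsP; exists x.
apply: (ld_inj HF) => //; by rewrite piF_spec.
Qed.

Lemma Pt_step t : 1 <= t -> Pt t.+1 -> Pt t.
Proof.
move=> t1 [h [hd hi hc]].
have [s [si sB]] := inj_sub rG (leaves_card t1).
pose h' x := if t < dF x then h x else if hasp x then fn G (h (piF x)) else s x.
have dpi : forall x, dF x = t -> hasp x -> dF (piF x) = t.+1.
  move=> x dx hx; have := ld_df HF (piF x); rewrite piF_spec // dx.
  by case: (dF (piF x)) => [|n] /= e; [rewrite e in t1 | rewrite e].
have hd' : forall x, t <= dF x -> dG (h' x) = dF x.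
  move=> x tx; rewrite /h'; case: ltnP => [lt|ge]; first by apply: hd.
  have dx : dF x = t by apply/eqP; rewrite eqn_leq ge tx.
  case: ifP => hx.
    by rewrite (ld_df HG) hd dpi // dx.
  by have := sB x; rewrite !inE dx eqxx hx => /(_ isT) /andP [/eqP -> _].
have ndr : forall y, 1 <= dG y -> y != rG.
  by move=> y; rewrite -(ld_d0 HG) lt0n.
exists h'; split => //.
- move=> x y; rewrite !inE => tx ty e.
  have := hd' x tx; have := hd' y ty; rewrite -e => ey ex.
  move: e; rewrite /h'.
  case: ltnP => [ltx|gex]; case: ltnP => [lty|gey].
  + by apply: hi; rewrite inE.
  + by move: ex ey; lia.
  + by move: ex ey; lia.
  have dx : dF x = t by lia.
  have dy : dF y = t by lia.
  case: ifP => hx; case: ifP => hy.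
  + move=> e.
    have nr : fn G (h (piF x)) != rG.
      by apply: ndr; rewrite (ld_df HG) hd ?dpi.
    have e2 : piF x = piF y by apply: hi (ld_inj HG e nr); rewrite inE dpi.
    by rewrite -(piF_spec hx) -(piF_spec hy) e2.
  + move=> e; have := sB y; rewrite !inE dy eqxx hy -e => /(_ isT) /andP [_].
    by move/negP; case; apply/existsP; exists (h (piF x)).
  + move=> e; have := sB x; rewrite !inE dx eqxx hx e => /(_ isT) /andP [_].
    by move/negP; case; apply/existsP; exists (h (piF y)).
  + by apply: si; rewrite inE ?dx ?dy eqxx ?hx ?hy.
- move=> x tx; rewrite /h' tx (ld_df HF).
  case: ltnP => [lt|ge]; first by apply: hc; lia.
  have dx : dF x = t.+1 by lia.
  have hp : hasp (fn F x) by apply/existsP; exists x.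
  rewrite hp piF_f // -(ld_d0 HF) (ld_df HF) dx /= -lt0n //.
Qed.

Lemma P1 : Pt 1.
Proof.
have : forall k, k <= L -> Pt (L.+1 - k).
  elim=> [|k IH] kL; first by apply: Pt_base; rewrite subn0.
  have -> : L.+1 - k.+1 = (L - k) by lia.
  apply: Pt_step; first by lia.
  have -> : (L - k).+1 = L.+1 - k by lia.
  by apply: IH; lia.
move=> /(_ L (leqnn _)); by rewrite subSnn.
Qed.

Lemma inj_ext : exists h : st F -> st G, injective h /\ forall x, h (fn F x) = fn G (h x).
Proof.
have [h [hd hi hc]] := P1.
have nr : forall x, x != rF -> 1 <= dF x by move=> x; rewrite -(ld_d0 HF) lt0n.
have dG0 : dG rG = 0 by apply/eqP; rewrite (ld_d0 HG).
exists (fun x => if x == rF then rG else h x); split.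
  move=> x y /=; case: eqP => [->|/eqP xr]; case: eqP => [->|/eqP yr] //.
  - move=> e; have := hd y (nr _ yr); rewrite -e dG0; have := nr _ yr; lia.
  - move=> e; have := hd x (nr _ xr); rewrite e dG0; have := nr _ xr; lia.
  - by apply: hi; rewrite inE nr.
move=> x /=; case: (x =P rF) => [->|/eqP xr]; first by rewrite (ld_fix HF) eqxx (ld_fix HG).
case: (fn F x =P rF) => [e|/eqP fr].
  apply/esym/eqP; rewrite -(ld_d0 HG) (ld_df HG) hd ?nr //.
  by move: (ld_df HF x); rewrite e; have := ld_d0 HF rF; rewrite eqxx => /eqP -> <-.
apply: hc; move: (ld_df HF x) (nr _ fr) (nr _ xr); lia.
Qed.
End Iso.

Lemma iso_LD K (F G : fds) rF rG dF dG L :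
  LDdata K F rF dF L -> LDdata K G rG dG L ->
  (forall t, 1 <= t -> #|[pred x | dF x == t]| = #|[pred y | dG y == t]|) ->
  (forall t, 1 <= t ->
    #|[pred x | (dF x == t) && hasp x]| = #|[pred y | (dG y == t) && hasp y]|) ->
  fds_iso F G.
Proof.
move=> HF HG cN cC.
have [h [hi hc]] := inj_ext HF HG cN cC.
have [g [gi _]] := inj_ext HG HF (fun t t1 => esym (cN t t1)) (fun t t1 => esym (cC t t1)).
exists h; split => //; apply: inj_card_bij => //.
exact: leq_card gi.
Qed.


Lemma digits (B n : nat) (a b : nat -> nat) : (forall j, a j < B) -> (forall j, b j < B) ->
  \sum_(j < n) a j * B ^ j = \sum_(j < n) b j * B ^ j -> forall j, j < n -> a j = b j.
Proof.
elim: n a b => [|n IH] a b ha hb; first by [].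
rewrite !big_ord_recl /= !expn0 !muln1.
have sh : forall c : nat -> nat, \sum_(i < n) c (bump 0 i) * B ^ bump 0 i =
    B * \sum_(i < n) c i.+1 * B ^ i.
  move=> c; rewrite big_distrr /=; apply: eq_bigr => i _.
  by rewrite /bump /= add1n expnS mulnCA.
rewrite !sh => e.
have B0 : 0 < B by apply: leq_ltn_trans (ha 0).
have e0 : a 0 = b 0.
  have := congr1 (fun z => z %% B) e; rewrite /= ![B * _]mulnC ![_ 0 + _]addnC !modnMDl.
  by rewrite !modn_small.
move: e; rewrite e0 => /addnI /eqP; rewrite eqn_pmul2l // => /eqP e1.
case=> [_ //|j jn]; apply: (IH (fun i => a i.+1) (fun i => b i.+1)) => //.
Qed.

Definition QF K (F : fds) L := exists r d, LDdata K F r d L /\ #|st F| < 2 ^ L.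

Lemma QF_one K F : linear_dendron K F -> exists L0, forall L, L0 <= L -> QF K F L.
Proof.
case/analysis => r [d [L0 h]]; exists (maxn L0 #|st F|) => L hL.
exists r, d; split; first by apply: h; apply: leq_trans hL; apply: leq_maxl.
apply: leq_trans (ltn_expl _ (leqnn 2)) _; rewrite leq_exp2l //.
by apply: leq_trans hL; apply: leq_maxr.
Qed.

Lemma QF_list K (l : seq fds) : (forall i, i < size l -> linear_dendron K (nth fds_one l i)) ->
  exists L0, forall L, L0 <= L -> forall i, i < size l -> QF K (nth fds_one l i) L.
Proof.
elim: l => [|F l IH] hl; first by exists 0.
have [L1 h1] := QF_one (hl 0 isT).
have [L2 h2] := IH (fun i hi => hl i.+1 hi).
exists (maxn L1 L2) => L hL [|i] /= hi.
  by apply: h1; apply: leq_trans hL; apply: leq_maxl.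
by apply: h2 => //; apply: leq_trans hL; apply: leq_maxr.
Qed.

Definition Rv K L (F : fds) := Ssum F 1 L - K.+1 ^ 1 * K.+1 ^ (L * L).

Lemma Ssum_Rv K L F r d p : LDdata K F r d L -> 0 < p ->
  Ssum F p L = K.+1 ^ p * K.+1 ^ (L * L) + Rv K L F /\ Rv K L F = Rdef K r L.
Proof.
move=> H p0; rewrite /Rv !(Ssum_LD H) // addKn; split => //.
Qed.

Lemma prod_list K L p (l : seq fds) : (forall i, i < size l -> exists r d, LDdata K (nth fds_one l i) r d L) ->
  0 < p ->
  \prod_(F <- l) Ssum F p L = \prod_(x <- map (Rv K L) l) (K.+1 ^ p * K.+1 ^ (L * L) + x).
Proof.
move=> hl p0; elim: l hl => [|F l IH] hl; first by rewrite !big_nil.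
rewrite /= !big_cons IH; last by move=> i hi; apply: (hl i.+1).
have [r [d H]] : exists r d, LDdata K F r d L := hl 0 isT.
by rewrite (Ssum_Rv H p0).1.
Qed.

Lemma match_iso K L F G : 1 <= K -> QF K F L -> QF K G L -> Rv K L F = Rv K L G -> fds_iso F G.
Proof.
move=> K1 [rF [dF [HF cF]]] [rG [dG [HG cG]]] e.
rewrite (Ssum_Rv HF (isT : 0 < 1)).2 (Ssum_Rv HG (isT : 0 < 1)).2 !Rdef_cnt // in e.
have B2 : 2 ^ L <= K.+1 ^ L by case: (posnP L) => [->|L0] //; rewrite leq_exp2r.
have ha : forall j, cnt rF L j < K.+1 ^ L.
  by move=> j; apply: leq_ltn_trans (max_card _) (leq_trans cF B2).
have hb : forall j, cnt rG L j < K.+1 ^ L.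
  by move=> j; apply: leq_ltn_trans (max_card _) (leq_trans cG B2).
have ce := digits ha hb e.
have cC : forall t, 1 <= t ->
    #|[pred x | (dF x == t) && hasp x]| = #|[pred y | (dG y == t) && hasp y]|.
  move=> t t1; case: (leqP t L) => tL.
    rewrite (layer_cnt HF) ?t1 // (layer_cnt HG) ?t1 //.
    by apply: ce; lia.
  by rewrite (layer_big HF) // (layer_big HG).
apply: (iso_LD HF HG) => //.
case=> [//|[|t]] _; first by rewrite (ld_D1 HF) (ld_D1 HG).
by rewrite (layer_img HF) // (layer_img HG) // cC.
Qed.

Theorem mainTheorem5 (K : nat) (HK : 1 <= K) (Fs Gs : seq fds) :
  (forall i, i < size Fs -> linear_dendron K (nth fds_one Fs i)) ->
  (forall j, j < size Gs -> linear_dendron K (nth fds_one Gs j)) ->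
  fds_iso (fds_prodl Fs) (fds_prodl Gs) ->
  size Fs = size Gs /\
  exists s : seq nat, perm_eq s (iota 0 (size Fs)) /\
    forall i, i < size Fs -> fds_iso (nth fds_one Fs i) (nth fds_one Gs (nth 0 s i)).
Proof.
move=> hF hG hiso.
have [L1 q1] := QF_list hF.
have [L2 q2] := QF_list hG.
pose L := maxn L1 L2.
have qF : forall i, i < size Fs -> QF K (nth fds_one Fs i) L.
  by apply: q1; apply: leq_maxl.
have qG : forall i, i < size Gs -> QF K (nth fds_one Gs i) L.
  by apply: q2; apply: leq_maxr.
have ldF : forall i, i < size Fs -> exists r d, LDdata K (nth fds_one Fs i) r d L.
  by move=> i hi; have [r [d [H _]]] := qF i hi; exists r, d.
have ldG : forall i, i < size Gs -> exists r d, LDdata K (nth fds_one Gs i) r d L.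
  by move=> i hi; have [r [d [H _]]] := qG i hi; exists r, d.
have pe : perm_eq (map (Rv K L) Fs) (map (Rv K L) Gs).
  apply: (@prod_perm (K.+1 ^ (L * L)) _ K.+1); first by rewrite expn_gt0.
    by rewrite ltnS.
  move=> p p0; rewrite -!(prod_list _ p0) // -!Ssum_prodl.
  exact: Ssum_iso.
have sz : size Fs = size Gs by rewrite -(size_map (Rv K L)) (perm_size pe) size_map.
split => //.
case/(perm_iotaP 0): pe => Is pIs eIs.
exists Is; split; first by rewrite sz -(size_map (Rv K L) Gs).
move=> i hi.
have hIs : nth 0 Is i < size Gs.
  have : nth 0 Is i \in iota 0 (size (map (Rv K L) Gs)).
    by rewrite -(perm_mem pIs) mem_nth // (perm_size pIs) size_iota size_map -sz.
  by rewrite mem_iota size_map.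
apply: (match_iso HK (qF i hi) (qG _ hIs)).
have := congr1 (fun s => nth 0 s i) eIs.
rewrite /= (nth_map fds_one) // (nth_map 0); last first.
  by rewrite (perm_size pIs) size_iota size_map -sz.
by rewrite (nth_map fds_one).
Qed.
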